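(* Let $N\ge k$ and let $L=L_0+L_s$ be the generator defined in the context. For $V(x)=\frac{1}{N(N-1)}\sum_{1\le m<n\le N}(x_m-x_n)^2$ one has, for all $x\in\mathbb{R}^N$, $$(LV)(x)=\alpha b_2-\frac{\delta\varkappa}{N(N-1)}V(x),\qquad\text{where } \varkappa=\sum_{j=1}^l k_j^2-k>0 .$$
   Context: Fix an integer $k\ge2$ and integers $k_1,\dots,k_l\ge2$ with $k_1+\dots+k_l=k$ (the ''signature'', fixed independently of $N$). For $N\ge k$, let $\mathcal I$ be the set of ordered $k$-tuples $(i_1,\dots,i_k)$ of pairwise distinct elements of $\{1,\dots,N\}$. For $(i_1,\dots,i_k)\in\mathcal I$ split it into consecutive blocks $\Gamma_1,\dots,\Gamma_l$ of lengths $k_1,\dots,k_l$: $\Gamma_j=(i_{k_1+\dots+k_{j-1}+1},\dots,i_{k_1+\dots+k_j})$, and let $g_j=i_{k_1+\dots+k_{j-1}+1}$ be the first element of $\Gamma_j$. The synchronization map $J^{(i_1,\dots,i_k)}:\mathbb{R}^N\to\mathbb{R}^N$, $x\mapsto y$, is $y_m=x_m$ if $m\notin\{i_1,\dots,i_k\}$ and $y_m=x_{g_j}$ if $m\in\Gamma_j$. Let $\alpha>0,\delta>0$, and let $\rho$ be a probability measure on $\mathbb{R}$ with compact support and $b_2:=\int z^2\rho(dz)>0$. The generator $L=L_0+L_s$ acts on functions $f:\mathbb{R}^N\to\mathbb{R}$ by $(L_0f)(x)=\alpha\sum_{i=1}^N\int\big(f(x+ze_i)-f(x)\big)\rho(dz)$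 ($e_i$ the $i$-th unit vector) and $(L_sf)(x)=\frac{\delta}{N(N-1)\cdots(N-k+1)}\sum_{(i_1,\dots,i_k)\in\mathcal I}\big(f(J^{(i_1,\dots,i_k)}x)-f(x)\big)$. The function $V$ equals the empirical variance $\frac1{N-1}\sum_m(x_m-M(x))^2$, $M(x)=\frac1N\sum_m x_m$. *)

(* Defs.v *)
From HB Require Import structures.
From mathcomp Require Import all_boot all_order all_algebra.
From mathcomp Require Import all_classical all_reals all_analysis.
Set Implicit Arguments. Unset Strict Implicit. Unset Printing Implicit Defensive.
Import Order.TTheory GRing.Theory Num.Theory.
Local Open Scope ring_scope.
Local Open Scope classical_set_scope.

(* Position (0-based, in 'I_k) of the first element of the block containing
   position p, for consecutive blocks of lengths ks = [:: k_1; ...; k_l]. *)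
Fixpoint block_start (ks : seq nat) (p : nat) : nat :=
  match ks with
  | [::] => 0%N
  | kj :: ks' => if (p < kj)%N then 0%N else (kj + block_start ks' (p - kj))%N
  end.

Section Gen.
Variables (R : realType) (N k : nat) (ks : seq nat).

(* synchronization map J^{(i_1,...,i_k)} ; the k-tuple is t : 'I_k -> 'I_N *)
Definition sync (t : {ffun 'I_k -> 'I_N}) (x : 'I_N -> R) : 'I_N -> R :=
  fun m => match [pick p | t p == m] with
           | Some p => x (t (insubd p (block_start ks p)))
           | None => x m
           end.

Definition shift (x : 'I_N -> R) (i : 'I_N) (z : R) : 'I_N -> R :=
  fun m => x m + (if m == i then z else 0).

Definition L0 (alpha : R) (rho : probability R R) (f : ('I_N -> R) -> R)
  (x : 'I_N -> R) : R :=
  alpha * \sum_(i < N) Rintegral rho setT (fun z => f (shift x i z) - f x).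

Definition Ls (delta : R) (f : ('I_N -> R) -> R) (x : 'I_N -> R) : R :=
  delta / (N ^_ k)%:R *
  \sum_(t : {ffun 'I_k -> 'I_N} | injectiveb t) (f (sync t x) - f x).

Definition Lgen alpha rho delta f x : R := L0 alpha rho f x + Ls delta f x.

Definition Vfun (x : 'I_N -> R) : R :=
  ((N * (N - 1))%:R)^-1 *
  \sum_(m < N) \sum_(n < N | (m < n)%N) (x m - x n) ^+ 2.

Definition kappa : R := (\sum_(kj <- ks) kj ^ 2)%N%:R - k%:R.
End Gen.

Definition compact_support (R : realType) (rho : probability R R) : Prop :=
  exists c : R, rho [set z : R | c < `|z|] = 0%E.

(* Main.v *)
From HB Require Import structures.
From mathcomp Require Import all_boot all_order all_algebra.
From mathcomp Require Import all_classical all_reals all_analysis.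
From mathcomp Require Import ring lra.
From mathcomp Require Import fingroup perm.
From mathcomp Require Import measurable_realfun lebesgue_integral lebesgue_integrable lebesgue_Rintegral.
Require Import Defs.
Import Order.TTheory GRing.Theory Num.Theory.
Local Open Scope ring_scope.



Lemma int_lin (R : realType) (rho : probability R R) (a b : R) :
  0 < Rintegral rho setT (fun z => z ^+ 2) ->
  Rintegral rho setT (fun z => a * z + b * z ^+ 2) =
  a * Rintegral rho setT (fun z => z) + b * Rintegral rho setT (fun z => z ^+ 2).
Proof.
move=> H.
have m2 : measurable_fun setT (fun z : R => z ^+ 2) by exact: exprn_measurable.
have i2 : rho.-integrable setT (EFin \o (fun z : R => z ^+ 2)).
  apply/integrableP; split; first exact/measurable_EFinP.
  rewrite (eq_integral (fun z : R => (z ^+ 2)%:E)); last by move=> z _; rewrite /= ger0_norm // sqr_ge0.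
  rewrite ltey; apply/eqP => Ih.
  by move: H; rewrite /Rintegral Ih /= ltxx.
have ic : rho.-integrable setT (EFin \o (fun z : R => 1)).
  exact: finite_measure_integrable_cst.
have i1 : rho.-integrable setT (EFin \o (fun z : R => z)).
  apply: (le_integrable measurableT _ _ (integrableD measurableT ic i2)).
    exact/measurable_EFinP.
  move=> z _ /=; rewrite lee_fin.
  rewrite [`|1 + _|]ger0_norm; last by apply: addr_ge0; rewrite ?sqr_ge0.
  by case: (lerP 0 z) => hz; [rewrite ger0_norm // | rewrite ltr0_norm //]; nra.
rewrite RintegralD //.
  rewrite RintegralZl // RintegralZl //.
- apply: eq_integrable (integrableZl measurableT a i1) => //.
- apply: eq_integrable (integrableZl measurableT b i2) => //.
Qed.

Section S.
Variables (R : realType) (N : nat).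
Definition sA (x : 'I_N -> R) := \sum_(m < N) x m ^+ 2.
Definition sB (x : 'I_N -> R) := \sum_(m < N) x m.

Lemma pairs_eq (x : 'I_N -> R) :
  \sum_(m < N) \sum_(n < N | (m < n)%N) (x m - x n) ^+ 2 =
  N%:R * sA x - sB x ^+ 2.
Proof.
have full : \sum_(m < N) \sum_(n < N) (x m - x n) ^+ 2 =
    2 * (N%:R * sA x - sB x ^+ 2).
  under eq_bigr do under eq_bigr do rewrite sqrrB.
  have inner : forall i : 'I_N, \sum_(j < N) (x i ^+ 2 - x i * x j *+ 2 + x j ^+ 2)
     = x i ^+ 2 *+ N - (x i * sB x) *+ 2 + sA x.
    move=> i; rewrite big_split /= sumrB sumr_const card_ord sumrMnl -mulr_sumr.
    by rewrite /sA /sB.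
  under eq_bigr do rewrite inner.
  rewrite big_split /= sumrB sumr_const card_ord.
  have h1 : \sum_(i < N) x i ^+ 2 *+ N = N%:R * sA x.
    by rewrite /sA mulr_sumr; apply: eq_bigr => i _; rewrite mulr_natl.
  have h2 : \sum_(i < N) x i * sB x *+ 2 = 2 * sB x ^+ 2.
    rewrite (eq_bigr (fun i => (2 * sB x) * x i)); last first.
      by move=> i _; rewrite -mulr_natl; ring.
    rewrite -mulr_sumr -/(sB x); ring.
  rewrite h1 h2 -mulr_natl; ring.
have split : forall m n : 'I_N, (x m - x n) ^+ 2 =
    (if (m < n)%N then (x m - x n) ^+ 2 else 0) +
    (if (n < m)%N then (x n - x m) ^+ 2 else 0).
  move=> m n; case: (ltngtP m n) => h.
  - by rewrite addr0.
  - by rewrite add0r -sqrrN opprB.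
  - by rewrite (val_inj h) subrr expr0n /= addr0.
have e : \sum_(m < N) \sum_(n < N) (x m - x n) ^+ 2 =
   2 * \sum_(m < N) \sum_(n < N | (m < n)%N) (x m - x n) ^+ 2.
  under eq_bigr do rewrite (eq_bigr _ (fun n _ => split _ n)) big_split /=.
  rewrite big_split /= [X in _ + X]exchange_big /=.
  have ee : \sum_(m < N) \sum_(n < N | (m < n)%N) (x m - x n) ^+ 2 =
     \sum_(m < N) \sum_(n < N) (if (m < n)%N then (x m - x n) ^+ 2 else 0).
    by apply: eq_bigr => m _; rewrite big_mkcond.
  rewrite ee; ring.
have : 2 * \sum_(m < N) \sum_(n < N | (m < n)%N) (x m - x n) ^+ 2 =
    2 * (N%:R * sA x - sB x ^+ 2) by rewrite -e full.
have n2 : (2:R) != 0 by rewrite pnatr_eq0.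
by move=> h; exact: (mulfI n2 h).
Qed.

Lemma Vfun_eq (x : 'I_N -> R) :
  Vfun x = ((N * (N - 1))%:R)^-1 * (N%:R * sA x - sB x ^+ 2).
Proof. by rewrite /Vfun pairs_eq. Qed.

Lemma sB_shift x i z : sB (@shift R N x i z) = sB x + z.
Proof.
rewrite /sB /shift big_split /=; congr (_ + _).
by rewrite -big_mkcond big_pred1_eq.
Qed.

Lemma sA_shift x i z : sA (@shift R N x i z) = sA x + (2 * z * x i + z ^+ 2).
Proof.
rewrite /sA /shift.
rewrite (eq_bigr (fun m => x m ^+ 2 + (if m == i then 2 * z * x m + z ^+ 2 else 0))).
  by rewrite big_split /= -big_mkcond big_pred1_eq.
by move=> m _; case: eqP => _; [ring | rewrite addr0 addr0].
Qed.

Lemma NN1 : (2 <= N)%N -> (N * (N - 1))%:R = N%:R * (N%:R - 1 : R).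
Proof. by move=> h; rewrite natrM natrB ?(leq_trans _ h). Qed.

Lemma L0_eq alpha (rho : probability R R) x :
  (2 <= N)%N -> 0 < Rintegral rho setT (fun z => z ^+ 2) ->
  L0 alpha rho (@Vfun R N) x = alpha * Rintegral rho setT (fun z => z ^+ 2).
Proof.
move=> hN H; rewrite /L0; congr (_ * _).
set c := ((N * (N - 1))%:R : R)^-1.
have hc : c * (N%:R * (N%:R - 1)) = 1.
  by rewrite /c NN1 // mulVf // -NN1 // pnatr_eq0 muln_eq0 negb_or -!lt0n subn_gt0 (leq_trans _ hN).
have e : forall i : 'I_N, Rintegral rho setT (fun z => Vfun (shift x i z) - Vfun x) =
   (c * (2 * N%:R * x i - 2 * sB x)) * Rintegral rho setT (fun z => z) +
   (c * (N%:R - 1)) * Rintegral rho setT (fun z => z ^+ 2).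
  move=> i; rewrite -int_lin //; apply: eq_Rintegral => z _.
  rewrite !Vfun_eq sA_shift sB_shift -/c; ring.
rewrite (eq_bigr _ (fun i _ => e i)) big_split /= -!mulr_suml sumr_const card_ord.
have -> : \sum_(i < N) c * (2 * N%:R * x i - 2 * sB x) = 0.
  rewrite -mulr_sumr sumrB -mulr_sumr sumr_const card_ord -/(sB x).
  by rewrite -mulr_natl; ring.
rewrite mul0r add0r -[c *+ N]mulr_natr -(mulrA c) hc mul1r.
by [].
Qed.
End S.


Section C.
Variables (R : realType) (N k : nat).
Local Notation T := {ffun 'I_k -> 'I_N}.

Definition Pn : R := \sum_(t : T | injectiveb t) 1.

Lemma Pn_eq : Pn = (N ^_ k)%:R.
Proof.
have h := card_inj_ffuns 'I_k 'I_N; rewrite !card_ord in h.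
rewrite -h cardsE -sum1_card natr_sum.
by [].
Qed.

Lemma reidx (pi : {perm 'I_N}) (G : T -> R) :
  \sum_(t : T | injectiveb t) G t =
  \sum_(t : T | injectiveb t) G [ffun i => pi (t i)].
Proof.
have hi : injective (fun t : T => [ffun i => pi (t i)]).
  move=> t1 t2 /ffunP h; apply/ffunP => i; move: (h i); rewrite !ffunE.
  exact: perm_inj.
rewrite (reindex_inj hi) /=; apply: eq_bigl => t.
apply/injectiveP/injectiveP => h i j.
  by move=> e; apply: h; rewrite !ffunE e.
by rewrite !ffunE => /perm_inj /h.
Qed.

Lemma ind_sum (u : 'I_N) (f : 'I_N -> R) : f u = \sum_(v < N) (u == v)%:R * f v.
Proof.
rewrite (bigD1 u) //= eqxx mul1r big1 ?addr0 // => v /negbTE.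
by rewrite eq_sym => ->; rewrite mul0r.
Qed.

Definition C1 (a : 'I_k) (u : 'I_N) : R := \sum_(t : T | injectiveb t) (t a == u)%:R.

Lemma C1_perm (pi : {perm 'I_N}) a u : C1 a (pi u) = C1 a u.
Proof.
rewrite /C1 (reidx pi); apply: eq_bigr => t _; by rewrite ffunE (inj_eq perm_inj).
Qed.

Lemma C1_val a u : C1 a u = Pn / N%:R.
Proof.
have hN : (N%:R : R) != 0 by rewrite pnatr_eq0 -lt0n (leq_ltn_trans _ (ltn_ord u)).
have : N%:R * C1 a u = Pn.
  have -> : N%:R * C1 a u = \sum_(v < N) C1 a v.
    rewrite (eq_bigr (fun _ => C1 a u)); last first.
      by move=> v _; rewrite -(C1_perm (tperm u v) a u) tpermL.
    by rewrite sumr_const card_ord mulr_natl.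
  rewrite /C1 exchange_big /Pn; apply: eq_bigr => t _.
  by rewrite [RHS](ind_sum (t a) (fun _ => 1)); apply: eq_bigr => v _; rewrite mulr1.
by move=> <-; rewrite mulrC mulrA mulVf // mul1r.
Qed.

Lemma marg1 a (f : 'I_N -> R) :
  \sum_(t : T | injectiveb t) f (t a) = Pn / N%:R * \sum_(u < N) f u.
Proof.
under eq_bigr do rewrite (ind_sum (_ a) f).
rewrite exchange_big mulr_sumr; apply: eq_bigr => v _.
by rewrite -mulr_suml -/(C1 a v) C1_val.
Qed.

Definition C2 (a b : 'I_k) (u v : 'I_N) : R :=
  \sum_(t : T | injectiveb t) ((t a == u) && (t b == v))%:R.

Lemma C2_perm (pi : {perm 'I_N}) a b u v : C2 a b (pi u) (pi v) = C2 a b u v.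
Proof.
rewrite /C2 (reidx pi); apply: eq_bigr => t _; by rewrite !ffunE !(inj_eq perm_inj).
Qed.

Lemma C2_diag a b u : a != b -> C2 a b u u = 0.
Proof.
move=> hab; rewrite /C2 big1 // => t /injectiveP ht.
case: eqP => // e1; case: eqP => // e2.
by move: hab; rewrite -(inj_eq ht) e1 e2 eqxx.
Qed.

Lemma perm2 (u v u' v' : 'I_N) : u != v -> u' != v' ->
  exists pi : {perm 'I_N}, pi u = u' /\ pi v = v'.
Proof.
move=> huv hu'v'.
exists (tperm u u' * tperm v' (tperm u u' v))%g; rewrite !permM; split.
  rewrite tpermL (@tpermD _ v' (tperm u u' v) u') //; first by rewrite eq_sym.
  by rewrite -{2}(tpermL u u') (inj_eq perm_inj) eq_sym.
by rewrite tpermR.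
Qed.

Lemma sum_ne (F : 'I_N -> 'I_N -> R) :
  \sum_(u < N) \sum_(v < N) (u != v)%:R * F u v =
  \sum_(u < N) \sum_(v < N) F u v - \sum_(u < N) F u u.
Proof.
rewrite -sumrB; apply: eq_bigr => u _.
rewrite [X in _ = _ - X](ind_sum u (F u)) -sumrB; apply: eq_bigr => v _.
by case: eqP => _; rewrite /= ?mul1r ?mul0r ?subr0 ?subrr.
Qed.

Lemma C2_val a b u v : a != b ->
  C2 a b u v = (u != v)%:R * (Pn / (N%:R * (N%:R - 1))).
Proof.
move=> hab; have [-> | huv] := eqVneq u v; first by rewrite C2_diag // mul0r.
rewrite /= mul1r.
have hN : (2 <= N)%N.
  case: N u v huv => [[]//|[|n]] u v; last by [].
  by case: u => [[]//] ? ; case: v => [[]//] ?; rewrite eqxx.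
have hN0 : (N%:R * (N%:R - 1) : R) != 0.
  rewrite mulf_eq0 negb_or pnatr_eq0 -lt0n (leq_trans _ hN) //=.
  by rewrite subr_eq0 pnatr_eq1; apply/eqP => e; move: hN; rewrite e.
have : \sum_(u' < N) \sum_(v' < N) C2 a b u' v' = Pn.
  rewrite /C2 (eq_bigr (fun u' => \sum_(t : T | injectiveb t) \sum_(v' < N) ((t a == u') && (t b == v'))%:R)); last first.
    by move=> u' _; rewrite exchange_big.
  rewrite exchange_big /Pn; apply: eq_bigr => t _.
  rewrite [RHS](ind_sum (t a) (fun _ => 1)); apply: eq_bigr => u' _.
  rewrite mulr1 [RHS](ind_sum (t b) (fun _ => (t a == u')%:R)).
  apply: eq_bigr => v' _.
  by case: (t a == u'); case: (t b == v'); rewrite /= ?mul1r ?mul0r.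
have -> : \sum_(u' < N) \sum_(v' < N) C2 a b u' v' =
   \sum_(u' < N) \sum_(v' < N) (u' != v')%:R * C2 a b u v.
  apply: eq_bigr => u' _; apply: eq_bigr => v' _.
  have [-> | h] := eqVneq u' v'; first by rewrite C2_diag // mul0r.
  have [pi [e1 e2]] := @perm2 u v u' v' huv h.
  by rewrite mul1r -e1 -e2 C2_perm.
rewrite sum_ne !sumr_const !card_ord => <-.
set c := C2 a b u v; rewrite -[c *+ N]mulr_natr -[(c * N%:R) *+ N]mulr_natr.
field; by move: hN0; rewrite mulf_eq0 negb_or andbC.
Qed.

Lemma marg2 a b (F : 'I_N -> 'I_N -> R) : a != b ->
  \sum_(t : T | injectiveb t) F (t a) (t b) =
  Pn / (N%:R * (N%:R - 1)) *
    (\sum_(u < N) \sum_(v < N) F u v - \sum_(u < N) F u u).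
Proof.
move=> hab.
have e : forall t : T, F (t a) (t b) =
    \sum_(u < N) \sum_(v < N) ((t a == u) && (t b == v))%:R * F u v.
  move=> t; rewrite (ind_sum (t a) (fun u => F u (t b))); apply: eq_bigr => u _.
  rewrite (ind_sum (t b) (F u)) mulr_sumr; apply: eq_bigr => v _.
  by case: (t a == u); case: (t b == v); rewrite /= ?mul1r ?mul0r.
under eq_bigr do rewrite e.
rewrite exchange_big /= -sum_ne mulr_sumr; apply: eq_bigr => u _.
rewrite exchange_big /= mulr_sumr; apply: eq_bigr => v _.
rewrite -mulr_suml -/(C2 a b u v) C2_val //; ring.
Qed.
End C.


Lemma bs_le ks p : (block_start ks p <= p)%N.
Proof.
elim: ks p => [|kj ks IH] p //=; case: ifP => // hp.
have := IH (p - kj)%N; rewrite -(leq_add2l kj) => h; apply: (leq_trans h).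
by rewrite subnKC // leqNgt hp.
Qed.

Lemma split_nat (F : nat -> nat) a s :
  (\sum_(0 <= p < a + s) F p = \sum_(0 <= p < a) F p + \sum_(0 <= p < s) F (p + a))%N.
Proof.
rewrite (big_cat_nat _ (leq_addr s a)) //=; congr (_ + _)%N.
by rewrite -{1}[a]add0n big_addn addKn.
Qed.

Lemma bs_count ks :
  (\sum_(0 <= p < sumn ks) \sum_(0 <= q < sumn ks)
     (block_start ks p == block_start ks q) = \sum_(kj <- ks) kj ^ 2)%N.
Proof.
elim: ks => [|kj ks IH]; first by rewrite big_nil big_geq.
rewrite big_cons; change (sumn (kj :: ks)) with (kj + sumn ks)%N; rewrite split_nat.
have e1 : forall p, (p < kj)%N -> block_start (kj :: ks) p = 0%N.
  by move=> p /= ->.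
have e2 : forall p, block_start (kj :: ks) (p + kj) = (kj + block_start ks p)%N.
  by move=> p /=; rewrite ltnNge leq_addl /= addnK.
rewrite big_nat_cond (eq_bigr (fun _ => kj)); last first.
  move=> p; rewrite andbT => /andP [_ hp].
  rewrite split_nat e1 // big_nat_cond (eq_bigr (fun _ => 1%N)); last first.
    by move=> q; rewrite andbT => /andP [_ hq]; rewrite e1.
  rewrite -big_nat_cond sum_nat_const_nat subn0 muln1 big1_seq ?addn0 //.
  move=> q _; rewrite e2.
  by case: kj hp {e1 e2} => //.
rewrite -big_nat_cond sum_nat_const_nat subn0.
rewrite (eq_bigr (fun p => \sum_(0 <= q < sumn ks) (block_start ks p == block_start ks q))%N); last first.
  move=> p _; rewrite split_nat e2 big_nat_cond big1 ?add0n; last first.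
    move=> q; rewrite andbT => /andP [_ hq]; rewrite e1 //.
    by case: kj hq {e1 e2} => //.
  by apply: eq_bigr => q _; rewrite e2 eqn_add2l.
by rewrite IH expnS expn1.
Qed.

Lemma sum_eq1 (R : realType) (T : finType) (c : T) : \sum_(q : T) (c == q)%:R = 1 :> R.
Proof.
rewrite (bigD1 c) //= eqxx big1 ?addr0 // => q /negbTE.
by rewrite eq_sym => ->.
Qed.

Section B.
Variables (R : realType) (N : nat) (ks : seq nat).
Local Notation k := (sumn ks).

Definition gb (p : 'I_k) : 'I_k := insubd p (block_start ks p).

Lemma val_gb p : val (gb p) = block_start ks p.
Proof. by rewrite /gb val_insubd (leq_ltn_trans (bs_le ks p) (ltn_ord p)). Qed.

Lemma count_blocks :
  \sum_(p < k) \sum_(q < k) (gb p == gb q)%:R = (\sum_(kj <- ks) kj ^ 2)%N%:R :> R.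
Proof.
have hn : (\sum_(p < k) \sum_(q < k) (gb p == gb q) = \sum_(kj <- ks) kj ^ 2)%N.
  rewrite -bs_count big_mkord; apply: eq_bigr => p _; rewrite big_mkord.
  by apply: eq_bigr => q _; rewrite -val_eqE !val_gb.
by rewrite -hn natr_sum; apply: eq_bigr => p _; rewrite natr_sum.
Qed.

Lemma sum_sync (t : {ffun 'I_k -> 'I_N}) (x : 'I_N -> R) (h : R -> R) :
  injectiveb t ->
  \sum_(m < N) h (sync ks t x m) =
  \sum_(m < N) h (x m) + \sum_(p < k) (h (x (t (gb p))) - h (x (t p))).
Proof.
move=> /injectiveP ht.
apply/eqP; rewrite addrC -subr_eq; apply/eqP; rewrite -sumrB; symmetry.
have e : forall m : 'I_N, h (sync ks t x m) - h (x m) =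
    \sum_(p < k) if t p == m then h (x (t (gb p))) - h (x m) else 0.
  move=> m; rewrite -big_mkcond /sync; case: pickP => [p0 hp0 | hn].
    rewrite (eq_bigl (fun p => p == p0)); first by rewrite big_pred1_eq.
    by move=> p /=; rewrite -(eqP hp0) (inj_eq ht).
  by rewrite big_pred0 ?subrr.
rewrite (eq_bigr _ (fun m _ => e m)) exchange_big /=; apply: eq_bigr => p _.
rewrite -big_mkcond (eq_bigl (fun m => m == t p)); first by rewrite big_pred1_eq.
by move=> m /=; rewrite eq_sym.
Qed.
End B.

Section M.
Variables (R : realType) (N : nat) (ks : seq nat).
Local Notation k := (sumn ks).
Local Notation T := {ffun 'I_k -> 'I_N}.
Variable x : 'I_N -> R.
Local Notation A := (@sA R N x).
Local Notation B := (@sB R N x).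
Local Notation P := (@Pn R N k).

Definition E (a b : 'I_k) : R := \sum_(t : T | injectiveb t) x (t a) * x (t b).

Lemma E_val a b : E a b =
  P / (N%:R * (N%:R - 1)) * (B ^+ 2 - A) +
  (a == b)%:R * (P / N%:R * A - P / (N%:R * (N%:R - 1)) * (B ^+ 2 - A)).
Proof.
have [<- | hab] := eqVneq a b.
  rewrite mul1r addrC subrK /E (@marg1 R N k a (fun u => x u * x u)).
  by congr (_ * _); apply: eq_bigr => u _; rewrite expr2.
rewrite mul0r addr0 /E (@marg2 R N k a b (fun u v => x u * x v) hab); congr (_ * _).
rewrite /sB /sA expr2 mulr_suml; congr (_ - _).
  by apply: eq_bigr => u _; rewrite mulr_sumr.
Qed.

Lemma E4 a b c d :
  \sum_(t : T | injectiveb t) (x (t a) - x (t b)) * (x (t c) - x (t d)) =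
  E a c - E a d - E b c + E b d.
Proof.
rewrite /E -!sumrB -big_split /=; apply: eq_bigr => t _; ring.
Qed.

Lemma sum_beta2 :
  \sum_(t : T | injectiveb t) (\sum_(p < k) (x (t (gb ks p)) - x (t p))) ^+ 2 =
  (P / N%:R * A - P / (N%:R * (N%:R - 1)) * (B ^+ 2 - A)) *
  ((\sum_(kj <- ks) kj ^ 2)%N%:R - k%:R).
Proof.
set D := (P / N%:R * A - _).
set c2 := P / (N%:R * (N%:R - 1)) * (B ^+ 2 - A).
rewrite (eq_bigr (fun t : T => \sum_(p < k) \sum_(q < k)
   (x (t (gb ks p)) - x (t p)) * (x (t (gb ks q)) - x (t q)))); last first.
  by move=> t _; rewrite expr2 mulr_suml; apply: eq_bigr => p _; rewrite mulr_sumr.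
rewrite exchange_big /=.
rewrite (eq_bigr (fun p => \sum_(q < k) D * ((gb ks p == gb ks q)%:R - (gb ks p == q)%:R
    - (p == gb ks q)%:R + (p == q)%:R))); last first.
  move=> p _; rewrite exchange_big /=; apply: eq_bigr => q _.
  rewrite E4 !E_val -/D -/c2; ring.
under eq_bigr do rewrite -mulr_sumr.
rewrite -mulr_sumr; congr (_ * _).
have hs : forall p : 'I_k, \sum_(q < k) ((gb ks p == gb ks q)%:R - (gb ks p == q)%:R
    - (p == gb ks q)%:R + (p == q)%:R) =
   \sum_(q < k) ((gb ks p == gb ks q)%:R : R) - \sum_(q < k) ((gb ks p == q)%:R : R)
   - \sum_(q < k) ((p == gb ks q)%:R : R) + \sum_(q < k) ((p == q)%:R : R).
  by move=> p; rewrite big_split /= !sumrB.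
rewrite (eq_bigr _ (fun p _ => hs p)) big_split /= !sumrB count_blocks.
have h1 : \sum_(p < k) \sum_(q < k) ((gb ks p == q)%:R : R) = k%:R.
  by under eq_bigr do rewrite sum_eq1; rewrite sumr_const card_ord.
have h2 : \sum_(p < k) \sum_(q < k) ((p == gb ks q)%:R : R) = k%:R.
  rewrite exchange_big /=; under eq_bigr do (under eq_bigr do rewrite eq_sym; rewrite sum_eq1).
  by rewrite sumr_const card_ord.
have h3 : \sum_(p < k) \sum_(q < k) ((p == q)%:R : R) = k%:R.
  by under eq_bigr do rewrite sum_eq1; rewrite sumr_const card_ord.
rewrite h1 h2 h3; ring.
Qed.

Lemma sum_alpha (f : R -> R) :
  \sum_(t : T | injectiveb t) \sum_(p < k) (f (x (t (gb ks p))) - f (x (t p))) = 0.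
Proof.
rewrite exchange_big /= big1 // => p _.
by rewrite sumrB (@marg1 R N k (gb ks p) (fun u => f (x u))) (@marg1 R N k p (fun u => f (x u))) subrr.
Qed.

Lemma Ls_eq delta : (2 <= N)%N -> (k <= N)%N ->
  @Ls R N k ks delta (@Vfun R N) x = - (delta * @kappa R k ks / (N * (N - 1))%:R * @Vfun R N x).
Proof.
move=> hN hkN.
set c := ((N * (N - 1))%:R : R)^-1.
set al := fun t : T => \sum_(p < k) (x (t (gb ks p)) ^+ 2 - x (t p) ^+ 2).
set be := fun t : T => \sum_(p < k) (x (t (gb ks p)) - x (t p)).
have e : forall t : T, injectiveb t ->
    Vfun (sync ks t x) - Vfun x = c * (N%:R * al t - 2 * B * be t - be t ^+ 2).
  move=> t ht; rewrite !(@Vfun_eq R N) -/c /sA /sB.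
  rewrite (@sum_sync R N ks t x (fun r => r ^+ 2) ht).
  rewrite (@sum_sync R N ks t x (fun r => r) ht).
  rewrite -/(@sA R N x) -/(@sB R N x) -/(al t) -/(be t); ring.
rewrite /Ls (eq_bigr _ e) -mulr_sumr !sumrB -!mulr_sumr.
rewrite /al /be (sum_alpha (fun r => r ^+ 2)) (sum_alpha (fun r => r)) sum_beta2.
rewrite -(@Pn_eq R N k) (@Vfun_eq R N) /c NN1 // /kappa.
have hP : P != 0.
  rewrite (@Pn_eq R N k) pnatr_eq0 -lt0n ffact_gt0 //.
have hN0 : (N%:R : R) != 0 by rewrite pnatr_eq0 -lt0n (leq_trans _ hN).
have hN1 : (N%:R - 1 : R) != 0.
  by rewrite subr_eq0 pnatr_eq1; apply/eqP => e1; move: hN; rewrite e1.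
field.
by rewrite hN0 hN1.
Qed.
End M.


Lemma sq_weak (ks : seq nat) : (sumn ks <= \sum_(kj <- ks) kj ^ 2)%N.
Proof.
elim: ks => [|kj ks IH]; first by rewrite big_nil.
rewrite big_cons /=; apply: leq_add => //.
by case: kj => // n; rewrite expnS expn1 leq_pmulr.
Qed.

Lemma sq_strict (ks : seq nat) : all (fun kj => 2 <= kj)%N ks -> (2 <= sumn ks)%N ->
  (sumn ks < \sum_(kj <- ks) kj ^ 2)%N.
Proof.
case: ks => [|kj ks] //= /andP [h2 _] _.
rewrite big_cons -addSn; apply: leq_add; last exact: sq_weak.
by rewrite expnS expn1 -{1}[kj]mul1n ltn_pmul2r // (leq_trans _ h2).
Qed.

Local Open Scope classical_set_scope.
Theorem lemma2 (R : realType) (N k : nat) (ks : seq nat)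
  (alpha delta : R) (rho : probability R R) :
  (2 <= k)%N -> all (fun kj => 2 <= kj)%N ks -> sumn ks = k -> (k <= N)%N ->
  0 < alpha -> 0 < delta ->
  compact_support rho -> 0 < Rintegral rho setT (fun z => z ^+ 2) ->
  0 < @kappa R k ks /\
  forall x : 'I_N -> R,
    @Lgen R N k ks alpha rho delta (@Vfun R N) x =
      alpha * Rintegral rho setT (fun z => z ^+ 2)
      - delta * @kappa R k ks / (N * (N - 1))%:R * @Vfun R N x.
Proof.
move=> hk hall hsum hkN ha hd _ hm; subst k.
have hN : (2 <= N)%N := leq_trans hk hkN.
split.
  by rewrite /kappa subr_gt0 ltr_nat sq_strict.
move=> x; rewrite /Lgen L0_eq // Ls_eq //.
Qed.
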